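(* For every $n\ge1$, $$\sum_{\sigma\in\mathfrak S_n}u^{{\rm M}(\sigma)}v^{{\rm des}(\sigma)}w^{{\rm asc}(\sigma)}\alpha^{{\rm LRmin}(\sigma)+{\rm RLmin}(\sigma)-2}=\sum_{\sigma\in\mathfrak S_n}x^{{\rm des}(\sigma)}y^{{\rm asc}(\sigma)}\alpha^{{\rm LRmin}(\sigma)+{\rm RLmin}(\sigma)-2},$$ where $x=\frac{(w+v)-\sqrt{(w+v)^2-4uvw}}{2}$ and $y=\frac{(w+v)+\sqrt{(w+v)^2-4uvw}}{2}$.
   Context: For $\sigma=\sigma_1\cdots\sigma_n\in\mathfrak S_n$: ${\rm asc}(\sigma)$, ${\rm des}(\sigma)$ are the numbers of $i\in[n-1]$ with $\sigma_i<\sigma_{i+1}$, resp. $\sigma_i>\sigma_{i+1}$; ${\rm M}(\sigma)$ is the number of $i$ with $1<i<n$ and $\sigma_{i-1}<\sigma_i>\sigma_{i+1}$; ${\rm LRmin}(\sigma)$ is the number of $i$ with $\sigma_j>\sigma_i$ for all $j<i$; ${\rm RLmin}(\sigma)$ is the number of $i$ with $\sigma_j>\sigma_i$ for all $j>i$. *)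

(* Defs.v *)
From mathcomp Require Import all_boot all_order all_algebra all_fingroup.
Set Implicit Arguments. Unset Strict Implicit. Unset Printing Implicit Defensive.

(* One-line notation of a permutation of 'I_n as the word sigma_1 ... sigma_n
   (values shifted to 0..n-1, positions 0-based; statistics are invariant). *)
Definition pword n (s : 'S_n) : seq nat := [seq val (s i) | i <- enum 'I_n].

Definition asc_w (w : seq nat) : nat :=
  count (fun i => nth 0 w i < nth 0 w i.+1) (iota 0 (size w).-1).
Definition des_w (w : seq nat) : nat :=
  count (fun i => nth 0 w i > nth 0 w i.+1) (iota 0 (size w).-1).
(* M: # interior positions j = i+1 (1 < j < n in 1-based indexing) that are peaks *)
Definition peak_w (w : seq nat) : nat :=
  count (fun i => (nth 0 w i < nth 0 w i.+1) && (nth 0 w i.+1 > nth 0 w i.+2))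
        (iota 0 (size w - 2)).
Definition lrmin_w (w : seq nat) : nat :=
  count (fun i => all (fun j => nth 0 w j > nth 0 w i) (iota 0 i)) (iota 0 (size w)).
Definition rlmin_w (w : seq nat) : nat :=
  count (fun i => all (fun j => nth 0 w j > nth 0 w i) (iota i.+1 (size w - i.+1)))
        (iota 0 (size w)).

Definition asc n (s : 'S_n) := asc_w (pword s).
Definition des n (s : 'S_n) := des_w (pword s).
Definition M n (s : 'S_n) := peak_w (pword s).
Definition LRmin n (s : 'S_n) := lrmin_w (pword s).
Definition RLmin n (s : 'S_n) := rlmin_w (pword s).

(* Main.v *)
Require Import Defs.
From mathcomp Require Import all_boot all_order all_algebra all_fingroup.
From mathcomp Require Import zify ring.
Set Implicit Arguments. Unset Strict Implicit. Unset Printing Implicit Defensive.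


Definition ins (j m : nat) (w : seq nat) := take j w ++ m :: drop j w.

Lemma size_ins j m w : j <= size w -> size (ins j m w) = (size w).+1.
Proof. by move=> hj; rewrite /ins size_cat /= size_take size_drop; case: ltnP; lia. Qed.

Lemma nth_ins j m w i : j <= size w ->
  nth 0 (ins j m w) i = if i < j then nth 0 w i else if i == j then m else nth 0 w i.-1.
Proof.
move=> hj; rewrite /ins nth_cat size_take.
have -> : (if j < size w then j else size w) = j by case: ltnP; lia.
case: ltnP => hi; first by rewrite nth_take.
case: eqP => [->|hne]; first by rewrite subnn.
have -> : i - j = (i - j).-1.+1 by lia.
rewrite /= nth_drop; congr nth; lia.
Qed.

Lemma count_shift (P : pred nat) a n :
  count P (iota a.+1 n) = count (fun i => P i.+1) (iota a n).
Proof. by elim: n a => [|n IH] a //=; rewrite IH. Qed.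

Lemma all_shift (P : pred nat) a n :
  all P (iota a.+1 n) = all (fun i => P i.+1) (iota a n).
Proof. by elim: n a => [|n IH] a //=; rewrite IH. Qed.

Lemma window (Px Pw : pred nat) a r b :
  (forall i, i < a -> Px i = Pw i) ->
  (forall i, a + r <= i < a + r + b -> Px i.+1 = Pw i) ->
  count Px (iota 0 (a + r.+1 + b)) + count Pw (iota a r)
  = count Pw (iota 0 (a + r + b)) + count Px (iota a r.+1).
Proof.
move=> h1 h2.
rewrite !iotaD !count_cat !add0n.
have -> : count Px (iota 0 a) = count Pw (iota 0 a).
  by apply: eq_in_count => i; rewrite mem_iota => /andP[_ hi]; apply: h1.
have -> : count Px (iota (a + r.+1) b) = count Pw (iota (a + r) b).
  rewrite addnS count_shift; apply: eq_in_count => i.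
  by rewrite mem_iota => hi; apply: h2.
lia.
Qed.

Ltac decide_ifs := repeat match goal with
 | |- context [ if ?c then _ else _ ] => let h := fresh "h" in case: ifP => h; try (exfalso; lia) end.

Lemma window0 (Px Pw : pred nat) a b :
  (forall i, i < a -> Px i = Pw i) ->
  (forall i, a <= i < a + b -> Px i.+1 = Pw i) ->
  count Px (iota 0 (a + 1 + b)) = count Pw (iota 0 (a + b)) + Px a.
Proof.
move=> h1 h2; have := @window Px Pw a 0 b h1.
rewrite !addn0 => /(_ h2) /=; lia.
Qed.

Lemma window1 (Px Pw : pred nat) a b :
  (forall i, i < a -> Px i = Pw i) ->
  (forall i, a + 1 <= i < a + 1 + b -> Px i.+1 = Pw i) ->
  count Px (iota 0 (a + 2 + b)) + Pw a = count Pw (iota 0 (a + 1 + b)) + Px a + Px a.+1.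
Proof.
move=> h1 h2; have := @window Px Pw a 1 b h1 h2 => /=; lia.
Qed.

Lemma window2 (Px Pw : pred nat) a b :
  (forall i, i < a -> Px i = Pw i) ->
  (forall i, a + 2 <= i < a + 2 + b -> Px i.+1 = Pw i) ->
  count Px (iota 0 (a + 3 + b)) + Pw a + Pw a.+1
  = count Pw (iota 0 (a + 2 + b)) + Px a + Px a.+1 + Px a.+2.
Proof.
move=> h1 h2; have := @window Px Pw a 2 b h1 h2 => /=; lia.
Qed.


Lemma ltm m w i : all (fun a => a < m) w -> i < size w -> nth 0 w i < m.
Proof. by move=> /all_nthP h; apply: h. Qed.

Lemma ltmF m w i : all (fun a => a < m) w -> i < size w -> (m < nth 0 w i) = false.
Proof. by move=> ha hi; apply/negbTE; rewrite -leqNgt ltnW // (ltm ha). Qed.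

Lemma asc_ins_int g b m w : size w = g + 2 + b -> all (fun a => a < m) w ->
  asc_w (ins g.+1 m w) + (nth 0 w g < nth 0 w g.+1) = asc_w w + 1.
Proof.
move=> hs ha; rewrite /asc_w size_ins ?hs; last lia.
set x := ins g.+1 m w.
have hx : forall i, nth 0 x i = if i < g.+1 then nth 0 w i else if i == g.+1 then m else nth 0 w i.-1.
  by move=> i; rewrite nth_ins ?hs; lia.
have -> : (g + 2 + b).+1.-1 = g + 2 + b by [].
have -> : (g + 2 + b).-1 = g + 1 + b by lia.
have W := @window1 (fun i => nth 0 x i < nth 0 x i.+1) (fun i => nth 0 w i < nth 0 w i.+1) g b.
have H1 : forall i, i < g -> (nth 0 x i < nth 0 x i.+1) = (nth 0 w i < nth 0 w i.+1).
  by move=> i hi; rewrite !hx; decide_ifs.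
have H2 : forall i, g + 1 <= i < g + 1 + b -> (nth 0 x i.+1 < nth 0 x i.+2) = (nth 0 w i < nth 0 w i.+1).
  by move=> i hi; rewrite !hx; decide_ifs.
move: (W H1 H2); cbv beta; rewrite !hx; decide_ifs.
rewrite (ltm ha) ?hs ?(ltmF ha) ?hs; lia.
Qed.

Lemma asc_ins_front b m w : size w = b.+1 -> all (fun a => a < m) w ->
  asc_w (ins 0 m w) = asc_w w.
Proof.
move=> hs ha; rewrite /asc_w size_ins ?hs; last lia.
set x := ins 0 m w.
have hx : forall i, nth 0 x i = if i < 0 then nth 0 w i else if i == 0 then m else nth 0 w i.-1.
  by move=> i; rewrite nth_ins ?hs; lia.
have -> : (b.+2).-1 = 0 + 1 + b by lia.
have -> : (b.+1).-1 = 0 + b by lia.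
have W := @window0 (fun i => nth 0 x i < nth 0 x i.+1) (fun i => nth 0 w i < nth 0 w i.+1) 0 b.
have H1 : forall i, i < 0 -> (nth 0 x i < nth 0 x i.+1) = (nth 0 w i < nth 0 w i.+1) by [].
have H2 : forall i, 0 <= i < 0 + b -> (nth 0 x i.+1 < nth 0 x i.+2) = (nth 0 w i < nth 0 w i.+1).
  by move=> i hi; rewrite !hx; decide_ifs.
move: (W H1 H2); cbv beta; rewrite !hx; decide_ifs.
rewrite ?(ltmF ha) ?hs; lia.
Qed.

Lemma asc_ins_end b m w : size w = b.+1 -> all (fun a => a < m) w ->
  asc_w (ins b.+1 m w) = asc_w w + 1.
Proof.
move=> hs ha; rewrite /asc_w size_ins ?hs; last lia.
set x := ins b.+1 m w.
have hx : forall i, nth 0 x i = if i < b.+1 then nth 0 w i else if i == b.+1 then m else nth 0 w i.-1.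
  by move=> i; rewrite nth_ins ?hs; lia.
have -> : (b.+2).-1 = b + 1 + 0 by lia.
have -> : (b.+1).-1 = b + 0 by lia.
have W := @window0 (fun i => nth 0 x i < nth 0 x i.+1) (fun i => nth 0 w i < nth 0 w i.+1) b 0.
have H1 : forall i, i < b -> (nth 0 x i < nth 0 x i.+1) = (nth 0 w i < nth 0 w i.+1).
  by move=> i hi; rewrite !hx; decide_ifs.
have H2 : forall i, b <= i < b + 0 -> (nth 0 x i.+1 < nth 0 x i.+2) = (nth 0 w i < nth 0 w i.+1).
  by move=> i hi; lia.
move: (W H1 H2); cbv beta; rewrite !hx; decide_ifs.
rewrite ?(ltm ha) ?hs; lia.
Qed.


Definition Qf (w : seq nat) := fun i =>
  (nth 0 w i < nth 0 w i.+1) && (nth 0 w i.+1 > nth 0 w i.+2).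

Lemma peakE w : peak_w w = count (Qf w) (iota 0 (size w - 2)).
Proof. by []. Qed.

Lemma pk_ins_int g b m w : size w = g + 2 + b -> all (fun a => a < m) w ->
  peak_w (ins g.+1 m w) + ((0 < g) && Qf w g.-1) + ((0 < b) && Qf w g)
  = peak_w w + 1.
Proof.
move=> hs ha; rewrite !peakE size_ins ?hs; last lia.
set j := g.+1.
set x := ins j m w.
have hx : forall i, nth 0 x i = if i < j then nth 0 w i else if i == j then m else nth 0 w i.-1.
  by move=> i; rewrite nth_ins ?hs /j; lia.
have hj : j = g.+1 by [].
clearbody x j.
have Hl : forall i, i < size w -> nth 0 w i < m by move=> i; apply: ltm.
have Hf : forall i, i < size w -> (m < nth 0 w i) = false by move=> i; apply: ltmF.
rewrite /Qf.
case: g hs hj => [|g] hs hj; subst j; case: b hs => [|b] hs.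
- have -> : (0 + 2 + 0).+1 - 2 = 0 + 1 + 0 by [].
  have -> : (0 + 2 + 0) - 2 = 0 + 0 by [].
  have W := @window0 (Qf x) (Qf w) 0 0.
  have H1 : forall i, i < 0 -> Qf x i = Qf w i by [].
  have H2 : forall i, 0 <= i < 0 + 0 -> Qf x i.+1 = Qf w i by move=> i; lia.
  move: (W H1 H2); rewrite /Qf; cbv beta; rewrite !hx; decide_ifs.
  rewrite !Hl ?hs //=; lia.
- have -> : (0 + 2 + b.+1).+1 - 2 = 0 + 2 + b by lia.
  have -> : (0 + 2 + b.+1) - 2 = 0 + 1 + b by lia.
  have W := @window1 (Qf x) (Qf w) 0 b.
  have H1 : forall i, i < 0 -> Qf x i = Qf w i by [].
  have H2 : forall i, 0 + 1 <= i < 0 + 1 + b -> Qf x i.+1 = Qf w i.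
    by move=> i hi; rewrite /Qf !hx; decide_ifs.
  move: (W H1 H2); rewrite /Qf; cbv beta; rewrite !hx; decide_ifs.
  rewrite !Hl ?Hf ?hs //=; try lia.
- have -> : (g.+1 + 2 + 0).+1 - 2 = g + 2 + 0 by lia.
  have -> : (g.+1 + 2 + 0) - 2 = g + 1 + 0 by lia.
  have W := @window1 (Qf x) (Qf w) g 0.
  have H1 : forall i, i < g -> Qf x i = Qf w i.
    by move=> i hi; rewrite /Qf !hx; decide_ifs.
  have H2 : forall i, g + 1 <= i < g + 1 + 0 -> Qf x i.+1 = Qf w i by move=> i; lia.
  move: (W H1 H2); rewrite /Qf; cbv beta; rewrite !hx; decide_ifs.
  rewrite !Hl ?Hf ?hs //=; try lia.
- have -> : (g.+1 + 2 + b.+1).+1 - 2 = g + 3 + b by lia.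
  have -> : (g.+1 + 2 + b.+1) - 2 = g + 2 + b by lia.
  have W := @window2 (Qf x) (Qf w) g b.
  have H1 : forall i, i < g -> Qf x i = Qf w i.
    by move=> i hi; rewrite /Qf !hx; decide_ifs.
  have H2 : forall i, g + 2 <= i < g + 2 + b -> Qf x i.+1 = Qf w i.
    by move=> i hi; rewrite /Qf !hx; decide_ifs.
  move: (W H1 H2); rewrite /Qf; cbv beta; rewrite !hx; decide_ifs.
  rewrite !Hl ?Hf ?hs //=; try lia.
Qed.

Lemma pk_ins_front b m w : size w = b.+1 -> all (fun a => a < m) w ->
  peak_w (ins 0 m w) = peak_w w.
Proof.
move=> hs ha; rewrite !peakE size_ins ?hs; last lia.
set x := ins 0 m w.
have hx : forall i, nth 0 x i = if i < 0 then nth 0 w i else if i == 0 then m else nth 0 w i.-1.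
  by move=> i; rewrite nth_ins ?hs; lia.
have Hf : forall i, i < size w -> (m < nth 0 w i) = false by move=> i; apply: ltmF.
case: b hs => [|b] hs; first by [].
have -> : b.+3 - 2 = 0 + 1 + b by lia.
have -> : b.+2 - 2 = 0 + b by lia.
have W := @window0 (Qf x) (Qf w) 0 b.
have H1 : forall i, i < 0 -> Qf x i = Qf w i by [].
have H2 : forall i, 0 <= i < 0 + b -> Qf x i.+1 = Qf w i.
  by move=> i hi; rewrite /Qf !hx; decide_ifs.
move: (W H1 H2); rewrite /Qf; cbv beta; rewrite !hx; decide_ifs.
rewrite ?Hf ?hs //=; lia.
Qed.

Lemma pk_ins_end b m w : size w = b.+1 -> all (fun a => a < m) w ->
  peak_w (ins b.+1 m w) = peak_w w.
Proof.
move=> hs ha; rewrite !peakE size_ins ?hs; last lia.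
set j := b.+1.
set x := ins j m w.
have hx : forall i, nth 0 x i = if i < j then nth 0 w i else if i == j then m else nth 0 w i.-1.
  by move=> i; rewrite nth_ins ?hs /j; lia.
have hj : j = b.+1 by [].
clearbody x j.
have Hf : forall i, i < size w -> (m < nth 0 w i) = false by move=> i; apply: ltmF.
case: b hs hj => [|b] hs hj; subst j; first by [].
have -> : b.+3 - 2 = b + 1 + 0 by lia.
have -> : b.+2 - 2 = b + 0 by lia.
have W := @window0 (Qf x) (Qf w) b 0.
have H1 : forall i, i < b -> Qf x i = Qf w i.
  by move=> i hi; rewrite /Qf !hx; decide_ifs.
have H2 : forall i, b <= i < b + 0 -> Qf x i.+1 = Qf w i by move=> i; lia.
move: (W H1 H2); rewrite /Qf; cbv beta; rewrite !hx; decide_ifs.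
rewrite ?Hf ?hs //=; lia.
Qed.


Lemma iota_split a c n : a <= c <= a + n ->
  iota a n = iota a (c - a) ++ iota c (a + n - c).
Proof.
move=> h; have -> : iota c (a + n - c) = iota (a + (c - a)) (a + n - c).
  by congr iota; lia.
by rewrite -iotaD; congr iota; lia.
Qed.

Lemma lr_ins j m w : j <= size w -> all (fun a => a < m) w ->
  lrmin_w (ins j m w) = lrmin_w w + (j == 0).
Proof.
move=> hj ha; rewrite /lrmin_w size_ins //.
have hx : forall i, nth 0 (ins j m w) i = if i < j then nth 0 w i else if i == j then m else nth 0 w i.-1.
  by move=> i; rewrite nth_ins.
set x := ins j m w in hx *.
have Hl : forall i, i < size w -> nth 0 w i < m by move=> i; apply: ltm.
have Hf : forall i, i < size w -> (m < nth 0 w i) = false by move=> i; apply: ltmF.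
set b := size w - j.
have -> : (size w).+1 = j + 1 + b by lia.
have -> : size w = j + b by lia.
have W := @window0 (fun i => all (fun j' => nth 0 x j' > nth 0 x i) (iota 0 i))
  (fun i => all (fun j' => nth 0 w j' > nth 0 w i) (iota 0 i)) j b.
rewrite W; cbv beta.
- congr (_ + _); case: (posnP j) => [->|jp] //.
  have -> : iota 0 j = 0 :: iota 1 j.-1 by case: (j) jp.
  rewrite /= !hx; decide_ifs; rewrite Hf /=; lia.
- move=> i hi; apply: eq_in_all => j'; rewrite mem_iota => hj'.
  by rewrite !hx; decide_ifs.
- move=> i hi.
  rewrite (@iota_split 0 j i.+1) ?(@iota_split 0 j i); try lia.
  rewrite !all_cat; congr andb.
    by apply: eq_in_all => j'; rewrite mem_iota => hj'; rewrite !hx; decide_ifs.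
  have -> : 0 + i.+1 - j = (i - j).+1 by lia.
  rewrite /= all_shift [nth 0 x i.+1]hx [nth 0 x j]hx ltnn eqxx; decide_ifs.
  rewrite /= Hl ?add0n /=; last lia.
  apply: eq_in_all => j'; rewrite mem_iota => hj'.
  by rewrite !hx; decide_ifs.
Qed.

Lemma rl_ins j m w : j <= size w -> all (fun a => a < m) w ->
  rlmin_w (ins j m w) = rlmin_w w + (j == size w).
Proof.
move=> hj ha; rewrite /rlmin_w size_ins //.
have hx : forall i, nth 0 (ins j m w) i = if i < j then nth 0 w i else if i == j then m else nth 0 w i.-1.
  by move=> i; rewrite nth_ins.
set x := ins j m w in hx *.
have Hl : forall i, i < size w -> nth 0 w i < m by move=> i; apply: ltm.
have Hf : forall i, i < size w -> (m < nth 0 w i) = false by move=> i; apply: ltmF.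
set k := size w in hj Hl Hf *.
set b := k - j.
have W := @window0 (fun i => all (fun j' => nth 0 x j' > nth 0 x i) (iota i.+1 (k.+1 - i.+1)))
  (fun i => all (fun j' => nth 0 w j' > nth 0 w i) (iota i.+1 (k - i.+1))) j b.
have e2 : k = j + b by lia.
have -> : iota 0 k.+1 = iota 0 (j + 1 + b) by congr iota; lia.
have -> : iota 0 k = iota 0 (j + b) by congr iota; lia.
rewrite W; cbv beta.
- congr (_ + _); case: eqVneq => [<-|ne]; first by rewrite subnn.
  have -> : k.+1 - j.+1 = (k - j.+1).+1 by lia.
  rewrite /= [nth 0 x j]hx [nth 0 x j.+1]hx ltnn eqxx; decide_ifs; rewrite Hf /=; lia.
- move=> i hi.
  rewrite (@iota_split i.+1 j (k.+1 - i.+1)) ?(@iota_split i.+1 j (k - i.+1)); try lia.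
  rewrite !all_cat; congr andb.
    by apply: eq_in_all => j'; rewrite mem_iota => hj'; rewrite !hx; decide_ifs.
  have -> : i.+1 + (k.+1 - i.+1) - j = (k - j).+1 by lia.
  have -> : i.+1 + (k - i.+1) - j = k - j by lia.
  rewrite /= all_shift [nth 0 x i]hx [nth 0 x j]hx ltnn eqxx; decide_ifs.
  rewrite Hl /=; last lia.
  apply: eq_in_all => j'; rewrite mem_iota => hj'.
  by rewrite !hx; decide_ifs.
- move=> i hi.
  have -> : k.+1 - i.+2 = k - i.+1 by lia.
  rewrite all_shift; apply: eq_in_all => j'; rewrite mem_iota => hj'.
  by rewrite !hx; decide_ifs.
Qed.

Import GRing.Theory.


Definition est w := (lrmin_w w + rlmin_w w - 2)%N.

Definition T (V : nmodType) (k : nat) (g : nat -> nat -> nat -> V) p a e : V :=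
  (g p a e.+1 + g p a.+1 e.+1 + g p a e *+ p + g p a.+1 e *+ p
   + g p.+1 a e *+ (a - p) + g p.+1 a.+1 e *+ (k.-1 - a - p))%R.

Lemma sum_if_count (V : nmodType) (I : Type) (s : seq I) (P : pred I) (x : V) :
  (\sum_(i <- s) (if P i then x else 0) = x *+ count P s)%R.
Proof.
elim: s => [|i s IH]; first by rewrite big_nil.
by rewrite big_cons IH /=; case: (P i); rewrite ?add0r // mulrS.
Qed.

Lemma count_splitP (I : Type) (A C : pred I) s :
  count A s = count (fun i => A i && C i) s + count (fun i => A i && ~~ C i) s.
Proof. by elim: s => //= i s ->; case: (A i); case: (C i) => /=; lia. Qed.

Lemma iota_rc n : iota 0 n.+1 = iota 0 n ++ [:: n].
Proof. by have := iotaD 0 n 1; rewrite addn1 add0n. Qed.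

Lemma lr_pos w : 0 < size w -> 0 < lrmin_w w.
Proof. by case: w. Qed.

Lemma rl_pos w : 0 < size w -> 0 < rlmin_w w.
Proof.
case: w => // a w' _; rewrite /rlmin_w.
set k := size (a :: w').
have -> : iota 0 k = iota 0 k.-1 ++ [:: k.-1] by rewrite -[in iota 0 k](@prednK k) // -addn1 iotaD.
rewrite count_cat /= (@prednK k) // subnn /=; lia.
Qed.

Lemma rearr (V : nmodType) (x1 x2 y1 y2 y3 y4 : V) :
  (x1 + (y1 + y2 + y3 + y4 + x2) = x1 + x2 + y1 + y3 + y2 + y4)%R.
Proof.
rewrite -!addrA; congr (_ + _)%R.
rewrite (addrC y4 x2) (addrCA y3 x2) (addrCA y2 x2) (addrCA y1 x2); congr (_ + _)%R.
by rewrite (addrCA y2 y3).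
Qed.

Lemma ins_sum (V : nmodType) (g : nat -> nat -> nat -> V) m w :
  0 < size w -> all (fun a => a < m) w ->
  (\sum_(j <- iota 0 (size w).+1)
     g (peak_w (ins j m w)) (asc_w (ins j m w)) (est (ins j m w))
  = T (size w) g (peak_w w) (asc_w w) (est w))%R.
Proof.
move=> hpos ha.
have lp := lr_pos hpos; have rp := rl_pos hpos.
move hk: (size w) hpos => k; case: k hk => // b hs _.
have -> : iota 0 b.+2 = 0 :: (iota 1 b ++ [:: b.+1]).
  by have := iotaD 1 b 1; rewrite addn1 /= => ->.
rewrite big_cons big_cat big_seq1 /=.
have Hle : forall j, j <= b.+1 -> j <= size w by move=> j; rewrite hs.
rewrite (pk_ins_front hs ha) (asc_ins_front hs ha) /est lr_ins ?Hle // rl_ins ?Hle // hs /=.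
rewrite addn0; have -> : (lrmin_w w + 1 + rlmin_w w - 2 = (lrmin_w w + rlmin_w w - 2).+1)%N by lia.
rewrite (pk_ins_end hs ha) (asc_ins_end hs ha) lr_ins ?Hle // rl_ins ?Hle // hs eqxx addn1.
have -> : (lrmin_w w + (b.+1 == 0) + (rlmin_w w + true) - 2 = (lrmin_w w + rlmin_w w - 2).+1)%N by lia.
set e := (lrmin_w w + rlmin_w w - 2)%N.
set p := peak_w w; set a := asc_w w.
rewrite -[1]/(1 + 0)%N iotaDl big_map.
set A := fun i => nth 0 w i < nth 0 w i.+1.
set Bp := fun i => (0 < i) && Qf w i.-1.
set Cp := fun i => (0 < b - i - 1) && Qf w i.
have Hint : forall i, i \in iota 0 b ->
  g (peak_w (ins (1 + i) m w)) (asc_w (ins (1 + i) m w))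
    (lrmin_w (ins (1 + i) m w) + rlmin_w (ins (1 + i) m w) - 2)
  = ((if A i && Cp i then g p a e else 0) + (if A i && ~~ Cp i then g p.+1 a e else 0)
    + (if ~~ A i && Bp i then g p a.+1 e else 0)
    + (if ~~ A i && ~~ Bp i then g p.+1 a.+1 e else 0))%R.
  move=> i; rewrite mem_iota add0n => hi.
  have hs' : size w = i + 2 + (b - i - 1) by lia.
  have E1 := asc_ins_int hs' ha.
  have E2 := pk_ins_int hs' ha.
  have hj : i.+1 <= size w by lia.
  rewrite add1n (lr_ins hj ha) (rl_ins hj ha).
  have -> : (i.+1 == 0) = false by [].
  have -> : (i.+1 == size w) = false by lia.
  rewrite !addn0 -/e.
  rewrite -/p -/a in E1 E2.
  have E1' : (asc_w (ins i.+1 m w) + A i = a + 1)%N := E1.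
  have E2' : (peak_w (ins i.+1 m w) + Bp i + Cp i = p + 1)%N := E2.
  have hBA : A i -> Bp i = false.
    rewrite /A /Bp /Qf => hA; case: (posnP i) => [->|ip] //=.
    have -> : i.-1.+1 = i by lia.
    have -> : (nth 0 w i.+1 < nth 0 w i) = false by apply/negbTE; rewrite -leqNgt ltnW.
    by rewrite andbF.
  have hCA : ~~ A i -> Cp i = false.
    by rewrite /A /Cp /Qf => /negbTE ->; rewrite andbF.
  clear E1 E2; move: E1' E2' hBA hCA.
  case: (A i); case: (Bp i); case: (Cp i) => //= E1 E2 hBA hCA;
    try (by have := hBA erefl); try (by have := hCA erefl);
    rewrite ?GRing.add0r ?GRing.addr0; congr g; lia.
rewrite (eq_big_seq _ Hint) !big_split /= !sum_if_count.
have cA : count A (iota 0 b) = a by rewrite /a /asc_w hs.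
have cC : count Cp (iota 0 b) = p.
  rewrite /p peakE hs /Cp; case: b {Hint Cp hs Hle cA} => [|b'] //.
  rewrite iota_rc count_cat /=.
  have -> : (0 < b'.+1 - b' - 1) = false by lia.
  rewrite /= !addn0 (_ : b'.+2 - 2 = b'); last lia. apply: eq_in_count => i.
  by rewrite mem_iota => hi; have -> : 0 < b'.+1 - i - 1 by lia.
have cB : count Bp (iota 0 b) = p.
  rewrite /p peakE hs /Bp; case: b {Hint Cp hs Hle cA cC} => [|b'] //=.
  rewrite add0n count_shift (_ : b'.+2 - 2 = b'); last lia. by apply: eq_count.
have cAC : count (fun i => A i && Cp i) (iota 0 b) = p.
  rewrite -cC; apply: eq_count => i; rewrite /A /Cp /Qf.
  by case: (nth 0 w i < nth 0 w i.+1); rewrite ?andbF.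
have cAB : count (fun i => ~~ A i && Bp i) (iota 0 b) = p.
  rewrite -cB; apply: eq_in_count => i; rewrite mem_iota => hi; rewrite /A /Bp /Qf.
  case: (posnP i) => [->|ip]; first by rewrite /= andbF.
  have -> : i.-1.+1 = i by lia.
  case: ltngtP => //= h; by rewrite ?andbF.

have cAnC : count (fun i => A i && ~~ Cp i) (iota 0 b) = (a - p)%N.
  by have := count_splitP A Cp (iota 0 b); rewrite cA cAC; lia.
have cnA : count (predC A) (iota 0 b) = (b - a)%N.
  by have := count_predC A (iota 0 b); rewrite size_iota cA; lia.
have cnAnB : count (fun i => ~~ A i && ~~ Bp i) (iota 0 b) = (b - a - p)%N.
  have := count_splitP (predC A) Bp (iota 0 b); rewrite cnA.
  by rewrite /predC /= -/(count (fun i => ~~ A i && Bp i) _) cAB; lia.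
rewrite cAC cAnC cAB cnAnB /T rearr.
by rewrite -[b.+1.-1]/b.
Qed.


Fixpoint Pn (k : nat) : seq (seq nat) :=
  if k is k'.+1 then [seq ins j k' w | w <- Pn k', j <- iota 0 k'.+1] else [:: [::]].

Definition good k (w : seq nat) := [&& uniq w, size w == k & all (fun a => a < k) w].

Lemma perm_ins j m w : perm_eq (ins j m w) (m :: w).
Proof.
rewrite /ins; have := perm_catCA (take j w) [:: m] (drop j w).
by rewrite /= cat_take_drop => ->.
Qed.

Lemma ins_inv j k w : j <= size w -> k \notin w ->
  index k (ins j k w) = j /\ take j (ins j k w) ++ drop j.+1 (ins j k w) = w.
Proof.
move=> hj hk.
have hs : size (take j w) = j by rewrite size_take; case: ltnP; lia.
have hkt : k \notin take j w by apply: contra hk; apply: mem_take.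
split.
  by rewrite /ins index_cat (negbTE hkt) /= eqxx hs addn0.
rewrite /ins take_cat drop_cat hs ltnn subnn take0 cats0.
have -> : (j.+1 < j) = false by lia.
by rewrite subSnn /= drop0 cat_take_drop.
Qed.

Lemma good_ins j k w : j <= k -> good k w -> good k.+1 (ins j k w).
Proof.
move=> hj /and3P[hu /eqP hs ha].
have hk : k \notin w by apply/negP => /(allP ha); rewrite ltnn.
have P := perm_ins j k w.
apply/and3P; split.
- by rewrite (perm_uniq P) /= hk hu.
- by rewrite (perm_size P) /= hs.
- rewrite (perm_all _ P) /= ltnSn /=; apply/allP => a /(allP ha); lia.
Qed.

Lemma mem_Pn k w : (w \in Pn k) = good k w.
Proof.
elim: k w => [|k IH] w.
  by case: w => [|a t] //; rewrite inE /good /= andbF.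
apply/idP/idP.
  case/allpairsP => [[w' j] [hw hj ->]].
  rewrite mem_iota in hj.
  apply: good_ins; rewrite /=; first by move: hj => /=; lia.
  by rewrite -IH.
case/and3P => hu /eqP hs ha.
have hkx : k \in w.
  have sub : {subset w <= iota 0 k.+1}.
    by move=> a /(allP ha); rewrite mem_iota; lia.
  have sz : size (iota 0 k.+1) <= size w by rewrite size_iota hs.
  have [_ E] := uniq_min_size hu sub sz.
  by rewrite E mem_iota; lia.
set j := index k w.
have hjs : j < size w by rewrite index_mem.
set w' := take j w ++ drop j.+1 w.
have hw : w = ins j k w'.
  have hs' : size (take j w) = j by rewrite size_take hjs.
  rewrite /ins /w' take_cat drop_cat hs' ltnn subnn take0 cats0.

  rewrite drop0.
  by rewrite -{1}(cat_take_drop j w) (drop_nth 0 hjs) nth_index.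
have P := perm_ins j k w'.
rewrite -hw in P.
have hu' : uniq (k :: w') by rewrite -(perm_uniq P).
have gw' : good k w'.
  apply/and3P; split.
  - by case/andP: hu'.
  - by move: (perm_size P); rewrite /= hs => -[->].
  - case/andP: hu' => hk _.
    apply/allP => a ha'.
    have : a \in w by rewrite (perm_mem P) inE ha' orbT.
    move=> /(allP ha) ha2; have : a != k by apply: contraNneq hk => <-.
    move/eqP; lia.
apply/allpairsP; exists (w', j); split.
- by rewrite /= IH.
- by rewrite mem_iota /= add0n -hs hjs.
- exact: hw.
Qed.

Lemma uniq_Pn k : uniq (Pn k).
Proof.
elim: k => [|k IH] //.
change (uniq [seq ins j k w | w <- Pn k, j <- iota 0 k.+1]).
apply: allpairs_uniq => //; first exact: iota_uniq.
move=> [w1 j1] [w2 j2] /allpairsP [[a1 b1] [h1 h1' e1]] /allpairsP [[a2 b2] [h2 h2' e2]].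
case: e1 => -> ->; case: e2 => -> -> /= E.
move: h1 h2; rewrite /= !mem_Pn => /and3P[_ /eqP s1 a1'] /and3P[_ /eqP s2 a2'].
move: h1' h2'; rewrite !mem_iota /= => hj1 hj2.
have k1 : k \notin a1 by apply/negP => /(allP a1'); rewrite ltnn.
have k2 : k \notin a2 by apply/negP => /(allP a2'); rewrite ltnn.
have hb1 : b1 <= size a1 by rewrite s1 -ltnS; move: hj1; rewrite add0n.
have hb2 : b2 <= size a2 by rewrite s2 -ltnS; move: hj2; rewrite add0n.
have [i1 e1] := @ins_inv b1 k a1 hb1 k1.
have [i2 e2] := @ins_inv b2 k a2 hb2 k2.
have ej : b1 = b2 by rewrite -i1 -i2 E.
by rewrite -e1 -e2 E ej.
Qed.


Lemma pword_good n (s : 'S_n) : good n (pword s).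
Proof.
apply/and3P; split.
- rewrite /pword map_inj_uniq ?enum_uniq // => i j /val_inj; exact: perm_inj.
- by rewrite /pword size_map size_enum_ord.
- by rewrite /pword all_map; apply/allP => i _ /=.
Qed.

Lemma pword_inj n : injective (@pword n).
Proof.
move=> s t H; apply/permP => i; apply/val_inj.
move/eq_in_map: H => /(_ i); apply; exact: mem_enum.
Qed.

Lemma good_pword n x : good n x -> exists s : 'S_n, pword s = x.
Proof.
case/and3P => hu /eqP hs ha.
have H : forall i : 'I_n, nth 0 x i < n.
  by move=> i; apply: (all_nthP 0 ha); rewrite hs.
pose f := fun i : 'I_n => Ordinal (H i).
have finj : injective f.
  move=> i j /(congr1 val) /= E; apply/val_inj.
  by apply/eqP; rewrite -(nth_uniq 0 _ _ hu) ?hs ?ltn_ord //; apply/eqP.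
exists (perm finj).
rewrite /pword.
have -> : [seq val (perm finj i) | i <- enum 'I_n] = [seq nth 0 x i | i <- map val (enum 'I_n)].
  by rewrite -map_comp; apply: eq_map => i /=; rewrite permE.
by rewrite val_enum_ord -hs map_nth_iota0 // take_size.
Qed.

Lemma sum_perm (V : nmodType) n (F : seq nat -> V) :
  (\sum_(s : 'S_n) F (pword s) = \sum_(w <- Pn n) F w)%R.
Proof.
rewrite -(big_map (@pword n) xpredT F).
apply: perm_big; apply: uniq_perm.
- by rewrite map_inj_uniq ?index_enum_uniq //; exact: pword_inj.
- exact: uniq_Pn.
move=> x; rewrite mem_Pn; apply/idP/idP.
  by case/mapP => s _ ->; apply: pword_good.
by move/good_pword => [s <-]; apply: map_f; rewrite mem_index_enum.
Qed.

Lemma des_eq n l : good n l -> des_w l = (n.-1 - asc_w l)%N.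
Proof.
case/and3P => hu /eqP hs _; rewrite /des_w /asc_w hs.
have E := count_predC (fun i => nth 0 l i < nth 0 l i.+1) (iota 0 n.-1).
rewrite size_iota in E.
have -> : count (fun i => nth 0 l i > nth 0 l i.+1) (iota 0 n.-1)
   = count (predC (fun i => nth 0 l i < nth 0 l i.+1)) (iota 0 n.-1).
  apply: eq_in_count => i; rewrite mem_iota /= => hi.
  have hne : nth 0 l i != nth 0 l i.+1.
    by rewrite nth_uniq ?hs //; lia.
  by rewrite ltn_neqAle eq_sym hne /= -ltnNge.
lia.
Qed.

Import Num.Theory.
Local Open Scope ring_scope.


Lemma pascal (V : nmodType) (f : nat -> V) m :
  \sum_(0 <= j < m.+1) (f j + f j.+1) *+ 'C(m, j)
  = \sum_(0 <= j < m.+2) f j *+ 'C(m.+1, j).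
Proof.
under eq_bigr do rewrite mulrnDl.
rewrite big_split /= [RHS]big_nat_recl // bin0 mulr1n.
under [in RHS]eq_bigr do rewrite binS mulrnDr.
rewrite [in RHS]big_split /=.
rewrite (big_nat_recl m) // bin0 mulr1n.
rewrite [X in _ = _ + (X + _)](big_nat_recr m) //= bin_small // mulr0n addr0.
by rewrite addrA.
Qed.

Lemma pas2 (V : nmodType) (f : nat -> V) m :
  \sum_(0 <= j < m.+1) (f j *+ j + f j.+1 *+ (m - j)) *+ 'C(m, j)
  = (\sum_(0 <= i < m) f i.+1 *+ 'C(m.-1, i)) *+ (m.*2).
Proof.
under eq_bigr do rewrite mulrnDl -!mulrnA.
rewrite big_split /= (big_nat_recl m) // mul0n mulr0n add0r.
under eq_bigr do rewrite -mul_bin_diag.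
rewrite (big_nat_recr m) //= subnn mul0n mulr0n addr0.
under [X in _ + X]eq_bigr do rewrite -mul_bin_down.
rewrite -addnn mulrnDr -sumrMnl; congr (_ + _); by apply: eq_bigr => i _; rewrite mulrnA mulrnAC.
Qed.

Definition Lam (V : nmodType) k (g : nat -> nat -> nat -> V) :=
  \sum_(w <- Pn k) g (peak_w w) (asc_w w) (est w).

Definition Symm (V : nmodType) k (g : nat -> nat -> nat -> V) p e :=
  \sum_(0 <= j < (k.-1 - p.*2).+1) g p (p + j)%N e *+ 'C(k.-1 - p.*2, j).

Lemma Lam_step (V : nmodType) k (g : nat -> nat -> nat -> V) :
  (0 < k)%N -> Lam k.+1 g = Lam k (T k g).
Proof.
move=> kp; rewrite /Lam.
change (\sum_(w <- [seq ins j k w | w <- Pn k, j <- iota 0 k.+1])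
          g (peak_w w) (asc_w w) (est w) = \sum_(w <- Pn k) T k g (peak_w w) (asc_w w) (est w)).
rewrite big_allpairs_dep /=.
apply: eq_big_seq => w; rewrite mem_Pn => /and3P[_ /eqP hs ha].
have := @ins_sum V g k w; rewrite hs => ->//; by rewrite hs.
Qed.

Lemma alg6 (V : nmodType) (a b c d e f : V) C p :
  (a + b + c *+ p + d *+ p + e + f) *+ C = (a + b) *+ C + (c + d) *+ C *+ p + (e + f) *+ C.
Proof. by rewrite !mulrnDl !(mulrnAC _ p) !addrA. Qed.

Lemma SymT (V : nmodType) k (g : nat -> nat -> nat -> V) p e :
  (p.*2 < k)%N ->
  Symm k (T k g) p e = Symm k.+1 g p e.+1 + Symm k.+1 g p e *+ p
                      + Symm k.+1 g p.+1 e *+ (k.-1 - p.*2).*2.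
Proof.
move=> hp; rewrite /Symm /T.
set m := (k.-1 - p.*2)%N.
have hm1 : (k.+1.-1 - p.*2 = m.+1)%N by rewrite /m; lia.
rewrite hm1.
under eq_bigr => j _.
  have -> : (p + j - p = j)%N by lia.
  have -> : (k.-1 - (p + j) - p = m - j)%N by rewrite /m; lia.
  rewrite -!addnS alg6.
  over.
rewrite !big_split /= (pascal (fun j => g p (p + j)%N e.+1) m) sumrMnl (pascal (fun j => g p (p + j)%N e) m).
rewrite (pas2 (fun j => g p.+1 (p + j)%N e) m); congr (_ + _).
have hm0 : (k.-1 - p.*2 = m)%N by [].
clearbody m; case: m hm0 hm1 => [|m'] hm0 hm1; first by rewrite /= !mulr0n.
congr (_ *+ _).
have -> : (k - p.+1.*2 = m')%N by move: hm0; rewrite doubleS; lia.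
rewrite /=.
by apply: eq_bigr => i _; rewrite addnS.
Qed.

Lemma Inv (V : nmodType) k : (0 < k)%N -> forall g g' : nat -> nat -> nat -> V,
  (forall p e, (p.*2 < k)%N -> Symm k g p e = Symm k g' p e) -> Lam k g = Lam k g'.
Proof.
elim: k => // k IH _ g g' H.
case: k IH H => [|k] IH H.
  have := H 0%N 0%N isT; rewrite /Symm /Lam /= !big_nat1 !big_cons !big_nil /=.
  by rewrite !mulr1n !addr0 !addn0.
rewrite [LHS]Lam_step // [RHS]Lam_step //; apply: IH => // p e hp; rewrite !SymT //.
rewrite (H p e.+1) ?(H p e); try lia.
congr (_ + _).
case E: (k.+1.-1 - p.*2)%N => [|m]; first by rewrite !mulr0n.
by rewrite (H p.+1 e) //; move: E; rewrite doubleS /=; lia.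
Qed.

Lemma symB (R : comNzRingType) (a b c d : R) N p e : (p.*2 < N)%N ->
  \sum_(0 <= j < (N.-1 - p.*2).+1)
     c ^+ p * a ^+ (N.-1 - (p + j)) * b ^+ (p + j) * d ^+ e *+ 'C(N.-1 - p.*2, j)
  = (c * a * b) ^+ p * (a + b) ^+ (N.-1 - p.*2) * d ^+ e.
Proof.
move=> hp; set m := (N.-1 - p.*2)%N.
rewrite exprDn big_mkord mulr_sumr mulr_suml; apply: eq_bigr => [[j hj]] _ /=.
have -> : (N.-1 - (p + j) = p + (m - j))%N by rewrite /m; lia.
rewrite mulrnAr mulrnAl; congr (_ *+ _).
rewrite !exprD !exprMn; ring.
Qed.


Unset Implicit Arguments.

Theorem theorem6p4 (C : numClosedFieldType) (n : nat) (u v w alpha : C) :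
  (1 <= n)%N ->
  let x := ((w + v) - sqrtC ((w + v) ^+ 2 - 4 * u * v * w)) / 2 in
  let y := ((w + v) + sqrtC ((w + v) ^+ 2 - 4 * u * v * w)) / 2 in
  \sum_(s : 'S_n) u ^+ M s * v ^+ des s * w ^+ asc s
                   * alpha ^+ (LRmin s + RLmin s - 2)
  = \sum_(s : 'S_n) x ^+ des s * y ^+ asc s * alpha ^+ (LRmin s + RLmin s - 2).

Proof.
move=> hn x y.
have h2 : (2 : C) != 0 by rewrite pnatr_eq0.
have hspy : x + y = w + v by rewrite /x /y; field.
have hxy : x * y = u * v * w.
  have s2 := sqrtCK ((w + v) ^+ 2 - 4 * u * v * w).
  rewrite /x /y; set s := sqrtC _ in s2 *.
  have -> : (w + v - s) / 2 * ((w + v + s) / 2) = ((w + v) ^+ 2 - s ^+ 2) / 4 by field.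
  by rewrite s2; field.
pose g1 := fun p a e => u ^+ p * v ^+ (n.-1 - a) * w ^+ a * alpha ^+ e.
pose g2 := fun (p a e : nat) => x ^+ (n.-1 - a) * y ^+ a * alpha ^+ e.
have L : \sum_(s : 'S_n) u ^+ M s * v ^+ des s * w ^+ asc s
                   * alpha ^+ (LRmin s + RLmin s - 2) = Lam n g1.
  pose F1 := fun l => u ^+ peak_w l * v ^+ des_w l * w ^+ asc_w l * alpha ^+ est l.
  transitivity (\sum_(s : 'S_n) F1 (pword s)); first by [].
  rewrite (sum_perm n F1) /Lam; apply: eq_big_seq => l; rewrite mem_Pn => gl.
  by rewrite /g1 /F1 (des_eq gl).
have R : \sum_(s : 'S_n) x ^+ des s * y ^+ asc s * alpha ^+ (LRmin s + RLmin s - 2)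
     = Lam n g2.
  pose F2 := fun l => x ^+ des_w l * y ^+ asc_w l * alpha ^+ est l.
  transitivity (\sum_(s : 'S_n) F2 (pword s)); first by [].
  rewrite (sum_perm n F2) /Lam; apply: eq_big_seq => l; rewrite mem_Pn => gl.
  by rewrite /g2 /F2 (des_eq gl).
rewrite L R; apply: Inv => // p e hp; rewrite /Symm /g1 /g2.
cbv beta.
rewrite (@symB _ v w u alpha n p e hp).
have E := @symB _ x y 1 alpha n p e hp.
rewrite mul1r hxy hspy addrC in E.
rewrite -E; apply: eq_bigr => j _; by rewrite expr1n mul1r.
Qed.
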